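(* Let $\mathcal V$ be a finite alphabet, $\mathcal V^*$ the set of finite strings over $\mathcal V$, $e$ an environment, and $p(c,t)$ a joint distribution over implementations $c\in\mathcal V^*$ and test suites $t\in\mathcal V^*$ with marginals $p(c)$ and $p(t)$. Let $R(c,t\mid e):=\frac{1}{|t|}\sum_{k=1}^{|t|}O_k(c,t\mid e)\in[0,1]$. Define the functional equivalence classes $\mathcal N_c^\infty:=\{c'\in\mathcal V^*: O(c,t\mid e)=O(c',t\mid e)\text{ for all } t \text{ with } p(t)>0\}$ and $p(\mathcal N_c^\infty):=\sum_{c'\in\mathcal N_c^\infty}p(c')$. Assume: (i) (code-test calibration) $p(\mathcal N_c^\infty)=\mathbb P_{t\sim p}[R(c,t\mid e)=1]$ for every $c\in\mathcal V^*$; (ii) (well-specification) for $t\sim p$, almost surely there exists exactly one equivalence class $\mathcal N_c^\infty$ such that $R(c,t\mid e)=1$. For a set of $k$ distinct equivalence classes $\{\mathcal N_{c_i}^\infty\}_{i=1}^k$ define $\mathrm{Pass@k}(\{\mathcal N_{c_i}^\infty\}_{i=1}^k):=\mathbb P_{t\sim p}[\exists\, i\in\{1,\dots,k\}: R(c_i,t\mid e)=1]$. Then $\mathrm{Pass@k}$ is maximized (over all choices of $k$ distinct equivalence classes) by greedily selecting the $k$ classes $\mathcal N_c^\infty$ with the largest values of $p(\mathcal N_c^\infty)$.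
   Context: A test suite $t\in\mathcal V^*$ consists of $|t|\ge1$ test cases. For an environment $e$, an implementation $c$ and a test suite $t$, the test harness returns a deterministic output vector $O(c,t\mid e)=(O_1(c,t\mid e),\dots,O_{|t|}(c,t\mid e))\in\{0,1\}^{|t|}$, where $0$ indicates failure and $1$ success of the $k$-th test case. Codes in the same class $\mathcal N_c^\infty$ have the same value of $R(\cdot,t\mid e)$ for all $t$ with $p(t)>0$. *)

(* Defs.v *)
From HB Require Import structures.
From mathcomp Require Import all_boot all_order all_algebra.
From mathcomp Require Import all_classical all_reals all_analysis.
Set Implicit Arguments. Unset Strict Implicit. Unset Printing Implicit Defensive.
Import Order.TTheory GRing.Theory Num.Theory.
Local Open Scope classical_set_scope.
Local Open Scope ring_scope.
Local Open Scope ereal_scope.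

(* Conventions:
   - strings over the finite alphabet V are [seq V];
   - [ncases t] is the number |t| of test cases of test suite t;
   - [O e c t] is the deterministic output vector in {0,1}^|t| (a tuple of bools);
   - [p c t] is the (real, nonnegative, total mass 1) joint probability mass
     of (c, t); probabilities are countable sums [esum] in the extended reals. *)

Definition marg_c {R : realType} {V : finType} (p : seq V -> seq V -> R)
  (c : seq V) : \bar R := \esum_(t in [set: seq V]) (p c t)%:E.

Definition marg_t {R : realType} {V : finType} (p : seq V -> seq V -> R)
  (t : seq V) : \bar R := \esum_(c in [set: seq V]) (p c t)%:E.

Definition prob_t {R : realType} {V : finType} (p : seq V -> seq V -> R)
  (A : set (seq V)) : \bar R := \esum_(t in A) marg_t p t.

Definition Rscore {R : realType} {V : finType} {E : Type} {ncases : seq V -> nat}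
  (O : E -> forall c t : seq V, (ncases t).-tuple bool) (e : E)
  (c t : seq V) : R :=
  ((\sum_(k < ncases t) ((tnth (O e c t) k : nat)%:R : R)) / (ncases t)%:R)%R.

Definition eqclass {R : realType} {V : finType} {E : Type} {ncases : seq V -> nat}
  (O : E -> forall c t : seq V, (ncases t).-tuple bool) (e : E)
  (p : seq V -> seq V -> R) (c : seq V) : set (seq V) :=
  [set c' | forall t, 0 < marg_t p t -> O e c t = O e c' t].

Definition p_class {R : realType} {V : finType} {E : Type} {ncases : seq V -> nat}
  (O : E -> forall c t : seq V, (ncases t).-tuple bool) (e : E)
  (p : seq V -> seq V -> R) (c : seq V) : \bar R :=
  \esum_(c' in eqclass O e p c) marg_c p c'.

Definition pass_at_k {R : realType} {V : finType} {E : Type} {ncases : seq V -> nat}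
  (O : E -> forall c t : seq V, (ncases t).-tuple bool) (e : E)
  (p : seq V -> seq V -> R) (k : nat) (cs : 'I_k -> seq V) : \bar R :=
  prob_t p [set t | exists i : 'I_k, @Rscore R _ _ _ O e (cs i) t = 1%R].

(* Main.v *)
Require Import Defs.
From HB Require Import structures.
From mathcomp Require Import all_boot all_order all_algebra.
From mathcomp Require Import all_classical all_reals all_analysis.
From mathcomp Require Import zify.
Import Order.TTheory GRing.Theory Num.Theory.
Local Open Scope classical_set_scope.
Local Open Scope ring_scope.

Local Open Scope ereal_scope.

Lemma esum_disj_union (R : realType) (T : choiceType) (k : nat) (f : T -> \bar R)
  (A : 'I_k -> set T) : (forall t, 0 <= f t) ->
  (forall t, 0 < f t -> forall i j, A i t -> A j t -> i = j) ->
  \esum_(t in [set t | exists i, A i t]) f t = \sum_(i < k) \esum_(t in A i) f t.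
Proof.
move=> f0 Hd.
rewrite esum_mkcond.
under eq_bigr do rewrite esum_mkcond.
rewrite -esum_sum; last by move=> t i _ _; case: ifP.
apply: eq_esum => t _.
have [ft0|ftne0] := eqVneq (f t) 0.
  rewrite ft0 big1 //; first by case: ifP.
  by move=> i _; case: ifP.
have fpos : 0 < f t by rewrite lt_neqAle eq_sym ftne0 f0.
have [[i0 Hi0]|Hn] := pselect (exists i, A i t).
  rewrite ifT; last by rewrite inE; exists i0.
  rewrite (bigD1 i0) //= ifT ?inE // big1 ?adde0 // => j ji0.
  case: ifP => // /set_mem Hj.
  by rewrite (Hd t fpos _ _ Hj Hi0) eqxx in ji0.
rewrite ifF; last by apply/negbTE; apply/negP => /set_mem.
rewrite big1 // => i _; rewrite ifF //; apply/negbTE/negP => /set_mem Hi.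
by apply: Hn; exists i.
Qed.


Lemma greedy_sum (R : realType) (Y X : Type) (F : Y -> X) (w : Y -> \bar R) (k : nat)
  (cs ds : 'I_k -> Y) :
  (forall a b, F a = F b -> w a = w b) ->
  (forall i j, F (cs i) = F (cs j) -> i = j) ->
  (forall i j, F (ds i) = F (ds j) -> i = j) ->
  (forall (i : 'I_k) c, (forall j : 'I_k, (j < i)%N -> F c <> F (cs j)) -> w c <= w (cs i)) ->
  \sum_(i < k) w (ds i) <= \sum_(i < k) w (cs i).
Proof.
move=> wF cinj dinj greedy.
case: k cs ds cinj dinj greedy => [|n] cs ds cinj dinj greedy.
  by rewrite !big_ord0.
pose m := w (cs ord_max).
pose M : {set 'I_n.+1} := finset (fun i => `[< exists j, F (ds i) = F (cs j) >]).
pose g i := odflt i [pick j | `[< F (ds i) = F (cs j) >]].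
have gE i : i \in M -> F (ds i) = F (cs (g i)).
  rewrite inE => /asboolP [j Hj]; rewrite /g.
  case: pickP => [j' /asboolP //|/(_ j)]; by move/asboolP: Hj => ->.
have ginj : {in M &, injective g}.
  move=> i1 i2 H1 H2 e; apply: dinj; by rewrite (gE _ H1) (gE _ H2) e.
have Hm j : m <= w (cs j).
  apply: greedy => j' lt e; have := cinj _ _ e => ej.
  have := ltn_ord j; rewrite -ej /= in lt. move: lt; rewrite /=; lia.
have Hd i : i \notin M -> w (ds i) <= m.
  move=> iM; apply: greedy => j _ e; move: iM; rewrite inE => /asboolP; apply.
  by exists j.
have E f : \sum_(i < n.+1) (f i : \bar R) = \sum_(i in [set: 'I_n.+1]%SET) f i.
  by apply: eq_bigl => i; rewrite inE.
rewrite E (E (fun i => w (cs i))) [X in _ <= X](big_setID (g @: M)) (big_setID M) /=.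
rewrite ?finset.setTI ?finset.setIT.

apply: leeD.
  rewrite big_imset //=; rewrite le_eqVlt; apply/orP; left; apply/eqP; apply: eq_bigr => i iM.
  by apply: wF; apply: gE.
apply: (@le_trans _ _ (\sum_(i in [set: 'I_n.+1]%SET :\: M) m)).
  by apply: lee_sum => i; rewrite finset.in_setD => /andP [iM _]; apply: Hd.
apply: (@le_trans _ _ (\sum_(i in [set: 'I_n.+1]%SET :\: g @: M) m)); last first.
  by apply: lee_sum => i _; apply: Hm.
rewrite !sumr_const.
rewrite !finset.setTD.
have Hc : #|g @: M| = #|M| := card_in_imset ginj.
have h1 := cardsC M; have h2 := cardsC (g @: M).
have -> : #|~: (g @: M)| = #|~: M|.
  by apply/eqP; rewrite -(eqn_add2l #|M|) h1 -{1}Hc h2.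
by [].
Qed.

Local Close Scope ereal_scope.

Theorem proposition4p13 (R : realType) (V : finType) (E : Type)
  (ncases : seq V -> nat)
  (O : E -> forall c t : seq V, (ncases t).-tuple bool) (e : E)
  (p : seq V -> seq V -> R)
  (ncases_pos : forall t, (0 < ncases t)%N)
  (p_ge0 : forall c t, 0 <= p c t)
  (p_sum1 : (\esum_(x in [set: seq V * seq V]) (p x.1 x.2)%:E = 1)%E)
  (calibration : forall c,
     p_class O e p c = prob_t p [set t | @Rscore R _ _ _ O e c t = 1])
  (well_specified :
     prob_t p [set t | ~ (exists c, @Rscore R _ _ _ O e c t = 1 /\
                 forall c', @Rscore R _ _ _ O e c' t = 1 -> eqclass O e p c' = eqclass O e p c)]
     = 0%E)
  (k : nat) (cs : 'I_k -> seq V)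
  (cs_distinct : forall i j : 'I_k, eqclass O e p (cs i) = eqclass O e p (cs j) -> i = j)
  (cs_greedy : forall (i : 'I_k) (c : seq V),
     (forall j : 'I_k, (j < i)%N -> eqclass O e p c <> eqclass O e p (cs j)) ->
     (p_class O e p c <= p_class O e p (cs i))%E) :
  forall ds : 'I_k -> seq V,
    (forall i j : 'I_k, eqclass O e p (ds i) = eqclass O e p (ds j) -> i = j) ->
    (pass_at_k O e p ds <= pass_at_k O e p cs)%E.
Proof.
move=> ds dinj.
have pc_eq a b : eqclass O e p a = eqclass O e p b -> p_class O e p a = p_class O e p b.
  by rewrite /p_class => ->.
have mt0 t : (0 <= marg_t p t)%E by apply: esum_ge0 => c _; rewrite lee_fin.
have key (fs : 'I_k -> seq V) :
    (forall i j : 'I_k, eqclass O e p (fs i) = eqclass O e p (fs j) -> i = j) ->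
    pass_at_k O e p fs = (\sum_(i < k) p_class O e p (fs i))%E.
  move=> finj; under eq_bigr do rewrite calibration.
  rewrite /pass_at_k /prob_t; apply: esum_disj_union => // t tpos i j Hi Hj.
  apply: finj.
  have nB : ~ (~ (exists c, @Rscore R _ _ _ O e c t = 1 /\
                 forall c', @Rscore R _ _ _ O e c' t = 1 -> eqclass O e p c' = eqclass O e p c)).
    move=> Bt.
    have : (marg_t p t <= 0)%E.
      rewrite -well_specified /prob_t; apply: esum_ge; exists [set t].
        by split; [exact: finite_set1 | move=> x ->].
      by rewrite fsbig_set1.
    by rewrite leNgt tpos.
  have [c [_ Hc]] := contrapT nB.
  by rewrite (Hc _ Hi) (Hc _ Hj).
rewrite (key ds dinj) (key cs cs_distinct).
apply: (@greedy_sum R _ _ (eqclass O e p) (p_class O e p)) => //.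
Qed.
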